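(* Let $m$ be a positive integer, and let $\langle \mathscr{A} \mid \mathscr{R} \rangle$ be a generator-minimal strongly $C(2)$ presentation for a monoid which admits a strongly $C(m)$ presentation. Then $\langle \mathscr{A} \mid \mathscr{R} \rangle$ is a strongly $C(m)$ presentation.
   Context: A monoid presentation $\langle \mathscr{A} \mid \mathscr{R} \rangle$ consists of an alphabet $\mathscr{A}$ and a set $\mathscr{R} \subseteq \mathscr{A}^* \times \mathscr{A}^*$ of relations; the monoid presented is $\mathscr{A}^*$ modulo the smallest congruence $\equiv_\mathscr{R}$ containing $\mathscr{R}$. A relation word is a word occurring as one side of a relation. A piece is a word which occurs as a factor of two distinct relation words, or in two different (possibly overlapping) positions within one relation word; the empty word is always a piece. For a positive integer $n$ the presentation is $C(n)$ if no relation word can be written as a product of strictly fewer than $n$ pieces, and strongly $C(n)$ if it is $C(n)$ and in addition has no repeated relation words (no relation word occurs more than once as a side of a relation). A generator $a$ is redundant if it is $\equiv_\mathscr{R}$-equivalent to a product of zero or more other generators; the presentation is generator-minimal if it has no redundant generators. *)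

(* Defs.v *)
From Stdlib Require List.
From mathcomp Require Import all_boot.
Set Implicit Arguments. Unset Strict Implicit. Unset Printing Implicit Defensive.

Section Presentations.
Variable A : Type.

Definition rels := seq A * seq A -> Prop.

Inductive cong (R : rels) : seq A -> seq A -> Prop :=
| cong_base l r : R (l, r) -> cong R l r
| cong_refl u : cong R u u
| cong_sym u v : cong R u v -> cong R v u
| cong_trans u v w : cong R u v -> cong R v w -> cong R u w
| cong_ctx x y u v : cong R u v -> cong R (x ++ u ++ y) (x ++ v ++ y).

Definition relation_word (R : rels) (w : seq A) : Prop :=
  exists r, R (w, r) \/ R (r, w).

Definition piece (R : rels) (p : seq A) : Prop :=
  p = [::] \/
  exists w1 w2 x1 y1 x2 y2,
    [/\ relation_word R w1, relation_word R w2,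
        w1 = x1 ++ p ++ y1, w2 = x2 ++ p ++ y2 &
        (w1 <> w2 \/ x1 <> x2)].

Definition C_cond (n : nat) (R : rels) : Prop :=
  forall w, relation_word R w ->
    ~ (exists ps : seq (seq A),
         [/\ size ps < n, (forall p, List.In p ps -> piece R p) & flatten ps = w]).

Definition side (rel : seq A * seq A) (b : bool) : seq A :=
  if b then rel.2 else rel.1.

Definition no_repeated_relation_words (R : rels) : Prop :=
  forall rel1 rel2 b1 b2, R rel1 -> R rel2 ->
    side rel1 b1 = side rel2 b2 -> rel1 = rel2 /\ b1 = b2.

Definition strongly_C (n : nat) (R : rels) : Prop :=
  C_cond n R /\ no_repeated_relation_words R.

Definition redundant (R : rels) (a : A) : Prop :=
  exists w : seq A, (forall b, List.In b w -> b <> a) /\ cong R [:: a] w.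

Definition generator_minimal (R : rels) : Prop := forall a, ~ redundant R a.
End Presentations.

(* Monoid isomorphism A^*/~R  ->  B^*/~S, given on representatives:
   F is well defined and injective on classes, surjective onto classes,
   multiplicative and unit-preserving. *)
Definition presented_iso (A B : Type) (R : rels A) (S : rels B) : Prop :=
  exists F : seq A -> seq B,
    [/\ (forall u v, cong R u v -> cong S (F u) (F v)),
        (forall u v, cong S (F u) (F v) -> cong R u v),
        (forall w, exists u, cong S (F u) w),
        (forall u v, cong S (F (u ++ v)) (F u ++ F v)) &
        cong S (F [::]) [::]].

Definition admits_strongly_C (m : nat) (A : Type) (R : rels A) : Prop :=
  exists (B : Type) (S : rels B), strongly_C m S /\ presented_iso R S.

(* Main.v *)
Require Import Defs.
From mathcomp Require Import all_boot.
From Stdlib Require Import Classical ClassicalEpsilon Lia.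
From mathcomp Require Import zify.
Set Implicit Arguments. Unset Strict Implicit.

Lemma cong_cat T (P : rels T) u u' v v' :
  cong P u u' -> cong P v v' -> cong P (u ++ v) (u' ++ v').
Proof.
move=> H1 H2; apply: (@cong_trans _ _ _ (u' ++ v)).
  by have := cong_ctx [::] v H1; rewrite /= .
by have := cong_ctx u' [::] H2; rewrite !cats0.
Qed.

Definition nf T (P : rels T) u :=
  forall x r y, u = x ++ r ++ y -> ~ relation_word P r.

Lemma nf_sing T (P : rels T) u v : cong P u v ->
  (nf P u -> u = v) /\ (nf P v -> u = v).
Proof.
elim=> {u v}.
- move=> l r H; split=> Hn; exfalso; [apply: (Hn [::] l [::]); rewrite ?cats0 //|
   apply: (Hn [::] r [::]); rewrite ?cats0 //]; by [exists r; left| exists l; right].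
- by [].
- by move=> u v _ [H1 H2]; split=> H; [rewrite H2| rewrite H1].
- move=> u v w _ [H1 H2] _ [H3 H4]; split=> H.
    have E := H1 H; subst v; exact: H3.
  have E := H4 H; subst w; exact: H2.
- move=> x y u v _ [H1 H2]; split=> H.
    rewrite H1 //; move=> x' r y' E; apply: (H (x ++ x') r (y' ++ y)).
    by rewrite E !catA.
  rewrite H2 //; move=> x' r y' E; apply: (H (x ++ x') r (y' ++ y)).
  by rewrite E !catA.
Qed.

Lemma nf_factor T (P : rels T) x u y : nf P (x ++ u ++ y) -> nf P u.
Proof. move=> H x' r y' E; apply: (H (x ++ x') r (y' ++ y)); by rewrite E !catA. Qed.

Lemma C2_nil T (P : rels T) : C_cond 2 P -> ~ relation_word P [::].
Proof. move=> H Hr; apply: (H _ Hr); exists [::]; split=> //. Qed.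

Lemma C2_piece T (P : rels T) w : C_cond 2 P -> relation_word P w -> piece P w -> False.
Proof.
move=> H Hr Hp; apply: (H _ Hr); exists [:: w]; split=> //=; last by rewrite cats0.
by move=> p [<-|[]].
Qed.

Lemma nr_partner T (P : rels T) w : no_repeated_relation_words P ->
  relation_word P w -> exists w', cong P w w' /\ w <> w'.
Proof.
move=> Hn [r [H|H]].
  exists r; split; first exact: cong_base.
  move=> E; subst r; by have [_ ] := Hn _ _ false true H H erefl.
exists r; split; first exact: cong_sym (cong_base H).
move=> E; subst r; by have [_ ] := Hn _ _ false true H H erefl.
Qed.

Lemma in_split_cat T (q : T) l : List.In q l -> exists x y, l = x ++ q :: y.
Proof.
elim: l => [//|a l IH] /= [E|H]; first by subst; exists [::], l.
have [x [y ->]] := IH H; by exists (a :: x), y.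
Qed.

Lemma in_cat T (q : T) x y : List.In q (x ++ y) <-> List.In q x \/ List.In q y.
Proof. elim: x => [|a x IH] /=; [tauto| rewrite IH; tauto]. Qed.

Lemma F1 T (P : rels T) q l : C_cond 2 P -> relation_word P [:: q] ->
  relation_word P l -> List.In q l -> l = [:: q].
Proof.
move=> HC Hq Hl Hin; apply: NNPP => Hne.
have [x [y E]] := in_split_cat Hin.
apply: (C2_piece HC Hq); right.
exists [:: q], l, [::], [::], x, y; split=> //; last by left=> E'; apply: Hne.
Qed.

Lemma proper_nf T (P : rels T) w x f y : strongly_C 2 P -> relation_word P w ->
  w = x ++ f ++ y -> (x <> [::] \/ y <> [::]) -> nf P f.
Proof.
move=> [HC _] Hw E Hxy x' r y' Ef Hr.
apply: (C2_piece HC Hr); right.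
exists w, r, (x ++ x'), (y' ++ y), [::], [::]; split=> //; first by rewrite E Ef !catA.
  by rewrite cats0.
left=> Ewr; have : size w = size r by rewrite Ewr.
rewrite E Ef !size_cat => Hs.
case: Hxy => H; apply: H; apply/size0nil; lia.
Qed.
Lemma min_rel T (P : rels T) z : strongly_C 2 P ->
  (exists z', cong P z z' /\ z <> z') ->
  (forall x r y, z = x ++ r ++ y -> (x <> [::] \/ y <> [::]) -> ~ relation_word P r) ->
  relation_word P z.
Proof.
move=> HS [z' [Hc Hne]] Hm.
have : ~ nf P z by move=> Hn; apply: Hne; exact: (proj1 (nf_sing Hc)).
move=> Hnn; apply: NNPP => Hz; apply: Hnn => x r y E Hr.
case: (classic (x = [::] /\ y = [::])) => [[Ex Ey]|Hxy].
  by move: E; rewrite Ex Ey /= cats0 => E; apply: Hz; rewrite E.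
apply: (Hm x r y E) => //; tauto.
Qed.

Definition noQ T (Q : T -> Prop) (s : seq T) := forall t, List.In t s -> ~ Q t.

Lemma noQ_cat T (Q : T -> Prop) x y : noQ Q (x ++ y) <-> noQ Q x /\ noQ Q y.
Proof.
split.
  by move=> H; split=> t Ht; apply: H; apply/in_cat; tauto.
by move=> [H1 H2] t /in_cat [] Ht; [apply: H1| apply: H2].
Qed.

Lemma first_occ T (Q : T -> Prop) s : ~ noQ Q s ->
  exists s1 q s2, s = s1 ++ q :: s2 /\ noQ Q s1 /\ Q q.
Proof.
elim: s => [|a s IH] H.
  by exfalso; apply: H => t [].
case: (classic (Q a)) => Ha.
  by exists [::], a, s; split=> //; split=> // t [].
have : ~ noQ Q s.
  move=> Hs; apply: H => t /= [<-|Ht] //; exact: Hs.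
move=> /IH [s1 [q [s2 [E [H1 H2]]]]].
exists (a :: s1), q, s2; split; first by rewrite E.
split=> // t /= [<-|Ht] //; exact: H1.
Qed.

Lemma uniq_occ T (Q : T -> Prop) s1 q s2 t1 q' t2 :
  s1 ++ q :: s2 = t1 ++ q' :: t2 -> noQ Q s1 -> noQ Q t1 -> Q q -> Q q' ->
  [/\ s1 = t1, q = q' & s2 = t2].
Proof.
elim: s1 t1 => [|a s1 IH] [|b t1] /=.
- by case=> E1 E2; subst.
- by case=> E _ _ H1 Hq _; exfalso; apply: (H1 b); [left|rewrite -E].
- by case=> E _ H1 _ _ Hq'; exfalso; apply: (H1 a); [left|rewrite E].
- case=> -> E H1 H2 Hq Hq'.
  have [-> -> ->] := IH _ E (fun t Ht => H1 t (or_intror Ht))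
     (fun t Ht => H2 t (or_intror Ht)) Hq Hq'; by [].
Qed.

Definition FOP T (P : rels T) (Q : T -> Prop) u v :=
  forall u1 q u2, noQ Q u1 -> Q q -> u = u1 ++ q :: u2 ->
  exists v1 q' v2, [/\ noQ Q v1, Q q', v = v1 ++ q' :: v2, cong P u1 v1 & cong P u2 v2].

Lemma FOP_noQ T (P : rels T) (Q : T -> Prop) u v : FOP P Q v u -> noQ Q u -> noQ Q v.
Proof.
move=> H Hu; apply: NNPP => /first_occ [s1 [q [s2 [E [H1 H2]]]]].
have [v1 [q' [v2 [_ Hq' E' _ _]]]] := H _ _ _ H1 H2 E.
by apply: (Hu q') => //; rewrite E'; apply/in_cat; right; left.
Qed.

Lemma FOP_ctx T (P : rels T) (Q : T -> Prop) x u v y :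
  cong P u v -> FOP P Q u v -> FOP P Q v u -> FOP P Q (x ++ u ++ y) (x ++ v ++ y).
Proof.
move=> Huv H1 H2 u1 q u2 Hu1 Hq E.
case: (classic (noQ Q x)) => Hx.
  case: (classic (noQ Q u)) => Hu.
    have Hy : ~ noQ Q y.
      move=> Hy; apply: (Hu1 q) => //.
      suff : ~ List.In q (x ++ u ++ y) -> List.In q u1 by apply; move=> /in_cat [/Hx|/in_cat [/Hu|/Hy]].
      by rewrite E => /in_cat; move=> Hn; exfalso; apply: Hn; right; left.
    have [y1 [q0 [y2 [Ey [Hy1 Hq0]]]]] := first_occ Hy.
    have Hnq : noQ Q (x ++ u ++ y1) by apply/noQ_cat; split=> //; apply/noQ_cat.
    have [E1 E2 E3] := uniq_occ (s1 := u1) (t1 := x ++ u ++ y1) (q' := q0) (t2 := y2) (Q := Q)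
       (s2 := u2) (q := q) ltac:(by rewrite -E Ey !catA) Hu1 Hnq Hq Hq0.
    have Hv := FOP_noQ H2 Hu.
    exists (x ++ v ++ y1), q0, y2; split=> //.
    - by apply/noQ_cat; split=> //; apply/noQ_cat.
    - by rewrite Ey !catA.
    - by rewrite E1; apply: cong_ctx.
    - by rewrite E3; apply: cong_refl.
  have [s1 [q0 [s2 [Eu [Hs1 Hq0]]]]] := first_occ Hu.
  have Hnq : noQ Q (x ++ s1) by apply/noQ_cat.
  have [E1 E2 E3] := uniq_occ (s1 := u1) (t1 := x ++ s1) (q' := q0) (t2 := s2 ++ y) (Q := Q)
       (s2 := u2) (q := q) ltac:(by rewrite -E Eu -!catA) Hu1 Hnq Hq Hq0.
  have [v1 [q' [v2 [Hv1 Hq' Ev Hc1 Hc2]]]] := H1 _ _ _ Hs1 Hq0 Eu.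
  exists (x ++ v1), q', (v2 ++ y); split.
  - by apply/noQ_cat.
  - by [].
  - by rewrite Ev -!catA.
  - by rewrite E1; have := cong_ctx x [::] Hc1; rewrite !cats0.
  - by rewrite E3; exact: (cong_ctx [::] y Hc2).
have [s1 [q0 [s2 [Ex [Hs1 Hq0]]]]] := first_occ Hx.
have [E1 E2 E3] := uniq_occ (s1 := u1) (t1 := s1) (q' := q0) (t2 := s2 ++ u ++ y) (Q := Q)
       (s2 := u2) (q := q) ltac:(by rewrite -E Ex -!catA) Hu1 Hs1 Hq Hq0.
exists s1, q0, (s2 ++ v ++ y); split=> //.
- by rewrite Ex -!catA.
- by rewrite E1; apply: cong_refl.
- by rewrite E3; apply: cong_ctx.
Qed.

Lemma FO T (P : rels T) (Q : T -> Prop) :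
  (forall l r, P (l, r) -> (~ noQ Q l \/ ~ noQ Q r) ->
     exists q1 q2, [/\ Q q1, Q q2, l = [:: q1] & r = [:: q2]]) ->
  forall u v, cong P u v -> FOP P Q u v /\ FOP P Q v u.
Proof.
move=> HP u v; elim=> {u v}.
- move=> l r Hlr.
  split=> u1 q u2 Hu1 Hq E.
    have [q1 [q2 [H1 H2 El Er]]] : exists q1 q2, [/\ Q q1, Q q2, l = [:: q1] & r = [:: q2]].
      apply: HP => //; left=> Hn; apply: (Hn q) => //; rewrite E; apply/in_cat; by right; left.
    rewrite Er; move: E; rewrite El; case: u1 Hu1 => [|a u1] /=; last by case: u1.
    move=> _ [E1 E2]; subst; exists [::], q2, [::]; split=> //; apply: cong_refl.
  have [q1 [q2 [H1 H2 El Er]]] : exists q1 q2, [/\ Q q1, Q q2, l = [:: q1] & r = [:: q2]].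
    apply: HP => //; right=> Hn; apply: (Hn q) => //; rewrite E; apply/in_cat; by right; left.
  rewrite El; move: E; rewrite Er; case: u1 Hu1 => [|a u1] /=; last by case: u1.
  move=> _ [E1 E2]; subst; exists [::], q1, [::]; split=> //; apply: cong_refl.
- by move=> u; split=> u1 q u2 H1 H2 E; exists u1, q, u2; split=> //; apply: cong_refl.
- by move=> u v _ [].
- move=> u v w _ [A1 A2] _ [B1 B2]; split.
    move=> u1 q u2 H1 H2 E.
    have [v1 [q' [v2 [G1 G2 G3 G4 G5]]]] := A1 _ _ _ H1 H2 E.
    have [w1 [q'' [w2 [K1 K2 K3 K4 K5]]]] := B1 _ _ _ G1 G2 G3.
    exists w1, q'', w2; split=> //; [exact: cong_trans G4 K4| exact: cong_trans G5 K5].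
  move=> u1 q u2 H1 H2 E.
  have [v1 [q' [v2 [G1 G2 G3 G4 G5]]]] := B2 _ _ _ H1 H2 E.
  have [w1 [q'' [w2 [K1 K2 K3 K4 K5]]]] := A2 _ _ _ G1 G2 G3.
  exists w1, q'', w2; split=> //; [exact: cong_trans G4 K4| exact: cong_trans G5 K5].
- move=> x y u v Huv [H1 H2]; split; apply: FOP_ctx => //; exact: cong_sym.
Qed.

Definition S0 T (S : rels T) : rels T := fun p => [/\ S p, 2 <= size p.1 & 2 <= size p.2].

Lemma partner_uniq T (S : rels T) b z z0 : no_repeated_relation_words S ->
  (S ([:: b], z) \/ S (z, [:: b])) -> (S ([:: b], z0) \/ S (z0, [:: b])) -> z = z0.
Proof.
move=> Hn [H|H] [H0|H0].
- by have [[]] := Hn _ _ false false H H0 erefl.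
- by have [_] := Hn _ _ false true H H0 erefl.
- by have [_] := Hn _ _ true false H H0 erefl.
- by have [[]] := Hn _ _ true true H H0 erefl.
Qed.

Definition flatmap T (f : T -> seq T) (u : seq T) := flatten (map f u).

Lemma flatmap_cat T (f : T -> seq T) u v : flatmap f (u ++ v) = flatmap f u ++ flatmap f v.
Proof. by rewrite /flatmap map_cat flatten_cat. Qed.

Definition goodw T (S : rels T) (u : seq T) := forall b, List.In b u -> ~ relation_word S [:: b].

Lemma long_good T (S : rels T) l : C_cond 2 S -> relation_word S l -> 2 <= size l -> goodw S l.
Proof. by move=> HC Hl Hs b Hb Hr; have E := F1 HC Hr Hl Hb; rewrite E in Hs. Qed.

Lemma eps_exists T (S : rels T) : strongly_C 2 S ->
  exists eps : T -> seq T,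
    (forall u v, cong S u v -> cong (S0 S) (flatmap eps u) (flatmap eps v)) /\
    (forall u, goodw S u -> flatmap eps u = u).
Proof.
move=> [HC HN].
pose spec b e := (~ relation_word S [:: b] -> e = [:: b]) /\
  (forall z, (S ([:: b], z) \/ S (z, [:: b])) -> (2 <= size z -> e = z) /\ (size z < 2 -> e = [::])).
have Hex : forall b, exists e, spec b e.
  move=> b; case: (classic (relation_word S [:: b])) => Hb.
    have [z0 Hz0] := Hb.
    exists (if 2 <= size z0 then z0 else [::]); split=> // z Hz.
    have -> := partner_uniq HN Hz Hz0.
    by case: ifP => H; split=> // H'; exfalso; lia.
  exists [:: b]; split=> // z Hz; exfalso; apply: Hb; exists z; exact: Hz.
pose eps b := proj1_sig (constructive_indefinite_description _ (Hex b)).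
have Heps : forall b, spec b (eps b) := fun b => proj2_sig (constructive_indefinite_description _ (Hex b)).
have Hid : forall u, goodw S u -> flatmap eps u = u.
  elim=> [//|a u IH] Hg.
  rewrite /flatmap /= -/(flatmap eps u) IH; last by move=> b Hb; apply: Hg; right.
  by rewrite (proj1 (Heps a)) //; apply: Hg; left.
exists eps; split=> //.
move=> u v; elim=> {u v}.
- move=> l r H.
  have Hl : relation_word S l by exists r; left.
  have Hr : relation_word S r by exists l; right.
  have Hsz : forall s, relation_word S s -> size s = 1 \/ 2 <= size s.
    move=> s Hs; case: s Hs => [|a [|c s]] Hs /=; [by exfalso; apply: (C2_nil HC)| by left| by right].
  case: (Hsz _ Hl) => Hl1.
    case: l Hl1 H Hl => [|b [|? ?]] //= _ H Hl.
    have [H1 H2] := proj2 (Heps b) r (or_introl H).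
    case: (Hsz _ Hr) => Hr1.
      case: r Hr1 H Hr H1 H2 => [|c [|? ?]] //= _ H Hr H1 H2.
      have [_ H3] := proj2 (Heps c) [:: b] (or_intror H).
      rewrite /flatmap /= !cats0 H2 // H3 //; exact: cong_refl.
    rewrite /flatmap /= cats0 H1 // -/(flatmap eps r) Hid; first exact: cong_refl.
    exact: long_good.
  case: (Hsz _ Hr) => Hr1.
    case: r Hr1 H Hr => [|c [|? ?]] //= _ H Hr.
    have [H1 H2] := proj2 (Heps c) l (or_intror H).
    rewrite /flatmap /= cats0 H1 // -/(flatmap eps l) Hid; first exact: cong_refl.
    exact: long_good.
  rewrite !Hid; [|exact: long_good|exact: long_good].
  by apply: cong_base; split.
- move=> u; exact: cong_refl.
- by move=> u v _ H; apply: cong_sym.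
- by move=> u v w _ H1 _ H2; apply: cong_trans H1 H2.
- by move=> x y u v _ H; rewrite !flatmap_cat; apply: cong_ctx.
Qed.

Lemma S0_strong T (S : rels T) : strongly_C 2 S -> strongly_C 2 (S0 S).
Proof.
move=> [HC HN].
have Hrw : forall w, relation_word (S0 S) w -> relation_word S w.
  by move=> w [r [[H _ _]|[H _ _]]]; exists r; [left|right].
split.
  move=> w Hw [ps [Hs Hp Hf]]; apply: (HC w (Hrw _ Hw)); exists ps; split=> // p /Hp.
  move=> [->|[w1 [w2 [x1 [y1 [x2 [y2 [H1 H2 E1 E2 Hne]]]]]]]]; first by left.
  right; exists w1, w2, x1, y1, x2, y2; split=> //; exact: Hrw.
by move=> r1 r2 b1 b2 [H1 _ _] [H2 _ _]; apply: HN.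
Qed.

Lemma map_inj T U (f : T -> U) : (forall a b, f a = f b -> a = b) ->
  forall s t, map f s = map f t -> s = t.
Proof.
move=> Hf; elim=> [|a s IH] [|b t] //= [E1 E2].
by rewrite (Hf _ _ E1) (IH _ E2).
Qed.

Lemma map_split2 T U (f : T -> U) s x y : map f s = x ++ y ->
  exists s1 s2, [/\ s = s1 ++ s2, map f s1 = x & map f s2 = y].
Proof.
elim: x s => [|a x IH] s /=; first by move=> <-; exists [::], s.
case: s => [|b s] //= [E1 E2].
have [s1 [s2 [-> <- <-]]] := IH _ E2.
by exists (b :: s1), s2; split=> //=; rewrite E1.
Qed.

Lemma map_split3 T U (f : T -> U) s x r y : map f s = x ++ r ++ y ->
  exists x0 r0 y0, [/\ s = x0 ++ r0 ++ y0, map f x0 = x, map f r0 = r & map f y0 = y].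
Proof.
move=> /map_split2 [s1 [s2 [-> H1 /map_split2 [t1 [t2 [-> H2 H3]]]]]].
by exists s1, t1, t2.
Qed.

Lemma in_map_inv T U (f : T -> U) b s : List.In b (map f s) -> exists a, b = f a /\ List.In a s.
Proof.
elim: s => [//|a s IH] /= [<-|H]; first by exists a; split=> //; left.
by have [c [-> Hc]] := IH H; exists c; split=> //; right.
Qed.

Lemma in_map_f T U (f : T -> U) a s : List.In a s -> List.In (f a) (map f s).
Proof. elim: s => [//|b s IH] /= [<-|H]; [left|right; exact: IH]. by []. Qed.

Lemma factor1 T (a : T) x r y : x ++ r ++ y = [:: a] -> r = [::] \/ r = [:: a].
Proof.
case: x => [|c [|? ?]] //=.
  case: r => [|b [|? ?]] //=; [by left| by case: y => //= [[->]]; right].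
by case: r => [|? ?] //= [_]; left.
Qed.

Lemma nil_factor T (x r y : seq T) : x ++ r ++ y = [::] -> r = [::].
Proof. by case: x => //; case: r. Qed.

Lemma nr_partner2 T (P : rels T) w : no_repeated_relation_words P ->
  relation_word P w -> exists w', [/\ cong P w w', w <> w' & relation_word P w'].
Proof.
move=> Hn [r [H|H]].
  exists r; split; first exact: cong_base.
    move=> E; subst r; by have [_ ] := Hn _ _ false true H H erefl.
  by exists w; right.
exists r; split; first exact: cong_sym (cong_base H).
  move=> E; subst r; by have [_ ] := Hn _ _ false true H H erefl.
by exists w; left.
Qed.

Lemma main m A B (R : rels A) (S : rels B) (F : seq A -> seq B) :
  generator_minimal R -> strongly_C 2 R -> strongly_C 2 S -> C_cond m S ->
  (forall u v, cong R u v -> cong S (F u) (F v)) ->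
  (forall u v, cong S (F u) (F v) -> cong R u v) ->
  (forall w, exists u, cong S (F u) w) ->
  (forall u v, cong S (F (u ++ v)) (F u ++ F v)) ->
  cong S (F [::]) [::] -> C_cond m R.
Proof.
move=> Hgm HR HS HSm Fw Fr Fs Fm F0.
have [HRC HRN] := HR; have [HSC HSN] := HS.
have nfS0 : nf S [::].
  by move=> x r y /esym/nil_factor ->; apply: C2_nil.
have nfR1 : forall a, nf R [:: a].
  move=> a x r y Er; case: (factor1 (esym Er)) => ->; first exact: C2_nil.
  move=> [v Hv].
  have Hc : cong R [:: a] v by case: Hv => H; [apply: cong_base | apply: cong_sym; apply: cong_base].
  have Hne : v <> [:: a].
    by move=> E; subst v; case: Hv => H; have [_] := HRN _ _ false true H H erefl.
  case: (classic (List.In a v)) => Hin.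
    have [x0 [y0 E]] := in_split_cat Hin.
    apply: (C2_piece HRC (w := [:: a])); first by exists v.
    right; exists [:: a], v, [::], [::], x0, y0; split=> //; first by exists v.
      by exists [:: a]; case: Hv; [right|left].
    by left=> E'; apply: Hne.
  apply: (Hgm a); exists v; split=> // b Hb Eb; apply: Hin; by rewrite -Eb.
have atom : forall a z, cong S (F [:: a]) z -> size z = 1.
  move=> a z Hz.
  have HRa : forall u, cong S (F u) z -> u = [:: a].
    move=> u Hu; apply: esym; apply: (proj1 (nf_sing (Fr _ _ _))) => //.
    exact: cong_trans Hz (cong_sym Hu).
  case: z Hz HRa => [|b [|c z]] //= Hz HRa.
    by have := HRa [::] F0.
  have [u1 Hu1] := Fs [:: b]; have [u2 Hu2] := Fs (c :: z).
  have E : u1 ++ u2 = [:: a].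
    apply: HRa; apply: cong_trans (Fm _ _) _; exact: cong_cat Hu1 Hu2.
  case: u1 E Hu1 => [|? [|? ?]] //= E Hu1.
    have := proj1 (nf_sing (cong_trans (cong_sym F0) Hu1)) nfS0; by [].
  case: E => _ E; subst u2.
  have := proj1 (nf_sing (cong_trans (cong_sym F0) Hu2)) nfS0; by [].
have Hatom : forall a, exists b, F [:: a] = [:: b].
  move=> a; have := atom a _ (cong_refl _ (F [:: a])).
  by case: (F [:: a]) => [|b [|? ?]] //; exists b.
pose phi a := proj1_sig (constructive_indefinite_description _ (Hatom a)).
have Hphi : forall a, F [:: a] = [:: phi a] :=
  fun a => proj2_sig (constructive_indefinite_description _ (Hatom a)).
have Fphi : forall u, cong S (F u) (map phi u).
  elim=> [|a u IH] //=.
  apply: (cong_trans (Fm [:: a] u)); rewrite Hphi; exact: cong_cat (cong_refl _ _) IH.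
have phir : forall u v, cong S (map phi u) (map phi v) -> cong R u v.
  move=> u v H; apply: Fr; apply: cong_trans (Fphi u) _.
  apply: cong_trans H _; exact: cong_sym (Fphi v).
have phip : forall u v, cong R u v -> cong S (map phi u) (map phi v).
  move=> u v H; apply: cong_trans (cong_sym (Fphi u)) _.
  exact: cong_trans (Fw _ _ H) (Fphi v).
have phiinj : forall a b, phi a = phi b -> a = b.
  move=> a b E.
  have : cong R [:: a] [:: b] by apply: phir => /=; rewrite E; apply: cong_refl.
  by move=> /nf_sing [/(_ (nfR1 a)) [->]].
have minj := map_inj phiinj.
have goodpre : forall z, goodw S z -> exists z0, z = map phi z0.
  elim=> [|b z IH] Hg; first by exists [::].
  have [z0 ->] := IH (fun c Hc => Hg c (or_intror Hc)).
  have [u Hu] := Fs [:: b].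
  have Hn : nf S [:: b].
    by move=> x r y Er; case: (factor1 (esym Er)) => ->; [apply: C2_nil | apply: Hg; left].
  have := proj2 (nf_sing (cong_trans (cong_sym (Fphi u)) Hu)) Hn.
  by case: u Hu => [|a [|? ?]] //= _ [<-]; exists (a :: z0).
have good : forall w, relation_word R w -> goodw S (map phi w).
  move=> w Hw bb Hbb Hb; have [a [Eb Ha]] := in_map_inv Hbb; subst bb.
  have [z Hz] := Hb.
  have Hcz : cong S [:: phi a] z by case: Hz => H; [apply: cong_base| apply: cong_sym; apply: cong_base].
  have Hs1 := atom a z ltac:(by rewrite Hphi).
  case: z Hz Hcz Hs1 => [|c [|? ?]] //= Hz Hcz _.
  have Hc : relation_word S [:: c] by exists [:: phi a]; case: Hz; [right|left].
  pose Q q := q = phi a \/ q = c.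
  have QA : forall l, Q (phi l) -> l = a.
    move=> l [/phiinj //|E].
    have : cong S (map phi [:: l]) (map phi [:: a]) by rewrite /= E; apply: cong_sym.
    by move=> /phir /nf_sing [/(_ (nfR1 l)) [->]].
  have HQ : forall l r, S (l, r) -> (~ noQ Q l \/ ~ noQ Q r) ->
     exists q1 q2, [/\ Q q1, Q q2, l = [:: q1] & r = [:: q2]].
    have relQ : forall q, Q q -> relation_word S [:: q] by move=> q [->|->].
    have oneQ : forall s, relation_word S s -> ~ noQ Q s -> exists q, Q q /\ s = [:: q].
      move=> s Hs Hn; have [s1 [q [s2 [E [_ Hq]]]]] := first_occ Hn.
      exists q; split=> //; apply: (F1 HSC (relQ _ Hq) Hs).
      by rewrite E; apply/in_cat; right; left.
    have partQ : forall q s, Q q -> (S ([:: q], s) \/ S (s, [:: q])) -> exists q2, Q q2 /\ s = [:: q2].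
      move=> q s [->|->] Hs.
        by exists c; split; [right| exact: partner_uniq HSN Hs Hz].
      exists (phi a); split; first by left.
      by apply: partner_uniq HSN Hs _; case: Hz; [right|left].
    move=> l r H [Hl|Hr].
      have [q1 [Hq1 El]] := oneQ l (ex_intro _ r (or_introl H)) Hl.
      have [q2 [Hq2 Er]] := partQ q1 r Hq1 ltac:(by left; rewrite -El).
      by exists q1, q2.
    have [q2 [Hq2 Er]] := oneQ r (ex_intro _ l (or_intror H)) Hr.
    have [q1 [Hq1 El]] := partQ q2 l Hq2 ltac:(by right; rewrite -Er).
    by exists q1, q2.
  have [w' [Hww' Hne Hw']] := nr_partner2 HRN Hw.
  have : ~ noQ (fun l => l = a) w by move=> H; apply: (H a).
  move=> /first_occ [x [a0 [y [Ew [Hx Ea0]]]]]; subst a0.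
  have Hmx : noQ Q (map phi x).
    by move=> t Ht; have [l [Et Hl]] := in_map_inv Ht; subst t; move=> /QA El; apply: (Hx l).
  have [v1 [q' [v2 [Hv1 Hq' Ev Hc1 Hc2]]]] :=
    proj1 (FO HQ (phip _ _ Hww')) _ _ _ Hmx (or_introl erefl) ltac:(by rewrite Ew map_cat).
  have [s1 [s2 [Ew' E1 E2]]] := map_split2 Ev.
  case: s2 E2 Ew' => [|a' s2] //= [Ea' E2] Ew'.
  have Ha' : a' = a by apply: QA; rewrite Ea'.
  have Ex : x = s1.
    apply: (proj1 (nf_sing (phir _ _ (cong_trans Hc1 _)))); first by rewrite E1; apply: cong_refl.
    apply: (proper_nf HR Hw (x := [::]) (y := a :: y)); [by rewrite Ew | by right].
  have Ey : y = s2.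
    apply: (proj1 (nf_sing (phir _ _ (cong_trans Hc2 _)))); first by rewrite E2; apply: cong_refl.
    apply: (proper_nf HR Hw (x := x ++ [:: a]) (y := [::])); [by rewrite Ew cats0 -catA | by left; case: x {Hx Hmx Ew Ex Hc1}].
  by apply: Hne; rewrite Ew Ew' Ex Ey Ha'.
have [eps [Heps1 Heps2]] := eps_exists HS.
have HS0 := S0_strong HS.
have key : forall w, relation_word R w -> relation_word S (map phi w).
  move=> w Hw.
  suff : relation_word (S0 S) (map phi w).
    by move=> [r [[H _ _]|[H _ _]]]; exists r; [left|right].
  apply: (min_rel HS0).
    have [w' [Hww' Hne Hw']] := nr_partner2 HRN Hw.
    exists (map phi w'); split; last by move/minj.
    have := Heps1 _ _ (phip _ _ Hww').
    by rewrite !Heps2 //; apply: good.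
  move=> x r y Ex Hxy [r' Hr'].
  have [Hrr' Hsz'] : cong S r r' /\ 2 <= size r'.
    by case: Hr' => [[H _ H2]|[H H2 _]]; split=> //; [apply: cong_base | apply: cong_sym; apply: cong_base].
  have Hneq : r <> r'.
    move=> E; subst r'; case: Hr' => [[H _ _]|[H _ _]];
      by have [_] := HSN _ _ false true H H erefl.
  have Hgr' : goodw S r'.
    apply: long_good HSC _ Hsz'; by exists r; case: Hr' => [[H _ _]|[H _ _]]; [right|left].
  have [r0' Er0'] := goodpre _ Hgr'.
  have [x0 [r0 [y0 [Ew Ex0 Er0 Ey0]]]] := map_split3 Ex.
  have Hnf : nf R r0.
    apply: (proper_nf HR Hw Ew).
    by case: Hxy => H; [left; move=> E; apply: H; rewrite -Ex0 E | right; move=> E; apply: H; rewrite -Ey0 E].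
  apply: Hneq; rewrite -Er0 Er0'; congr (map phi _).
  apply: (proj1 (nf_sing (phir _ _ _))) => //.
  by rewrite Er0 -Er0'.
move=> w Hw [ps [Hsz Hp Hf]].
apply: (HSm _ (key _ Hw)); exists (map (map phi) ps); split.
- by rewrite size_map.
- move=> p' Hp'; have [p [Ep Hin]] := in_map_inv Hp'; subst p'.
  case: (Hp _ Hin) => [->|[w1 [w2 [x1 [y1 [x2 [y2 [H1 H2 E1 E2 Hne]]]]]]]]; first by left.
  right; exists (map phi w1), (map phi w2), (map phi x1), (map phi y1), (map phi x2), (map phi y2).
  split; [exact: key| exact: key| by rewrite E1 !map_cat| by rewrite E2 !map_cat|].
  by case: Hne => H; [left; move/minj | right; move/minj].
- by rewrite -map_flatten Hf.
Qed.

Theorem corollary3 (m : nat) (A : Type) (R : rels A) :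
  0 < m ->
  generator_minimal R ->
  strongly_C 2 R ->
  admits_strongly_C m R ->
  strongly_C m R.
Proof.
move=> _ Hgm HR [B [S [[HSm HSN] [F [Fw Fr Fs Fm F0]]]]].
split; last exact: (proj2 HR).
case: (leqP m 2) => Hm.
  move=> w Hw [ps [Hs Hp Hf]]; apply: (proj1 HR w Hw); exists ps; split=> //.
  exact: leq_trans Hs Hm.
apply: (main Hgm HR _ HSm Fw Fr Fs Fm F0); split=> //.
move=> w Hw [ps [Hs Hp Hf]]; apply: (HSm w Hw); exists ps; split=> //.
exact: ltn_trans Hs Hm.
Qed.
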